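(* Let $m,p,n$ be positive integers with $p\mid m$, $n>1$, $G=G(m,p,n)$, and let $\mathbf T=(T_1,\ldots,T_n)$ be a tuple of commuting contractions on a Hilbert space. Then $\boldsymbol\theta(\mathbf T)=(\theta_1(\mathbf T),\dots,\theta_n(\mathbf T))$ is a $\boldsymbol\Theta_n$-contraction if and only if $\mathbf T$ satisfies von Neumann's inequality for all $G$-invariant polynomials, i.e. $\|q(\mathbf T)\|\le\sup_{\overline{\mathbb D}^n}|q|$ for every $G$-invariant $q\in\mathbb C[z_1,\ldots,z_n]$.
   Context: Put $q_0=m/p$. $G(m,p,n)$ is the group of $n\times n$ monomial matrices whose nonzero entries are $m$-th roots of unity and whose product of nonzero entries is an $(m/p)$-th root of unity; it acts on $\mathbb C^n$ by $\sigma\cdot z=\sigma^{-1}z$, and a polynomial $q$ is $G$-invariant if $q(\sigma^{-1}\cdot z)=q(z)$ for all $\sigma\in G$. $\theta_i(z)=s_i(z_1^m,\ldots,z_n^m)$ for $1\le i\le n-1$ ($s_i$ the $i$-th elementary symmetric polynomial), $\theta_n(z)=(z_1\cdots z_n)^{q_0}$, $\boldsymbol\Theta_n=\boldsymbol\theta(\mathbb D^n)$, $\overline{\boldsymbol\Theta}_n=\boldsymbol\theta(\overline{\mathbb D}^n)$. A commuting tuple $(S_1,\dots,S_n)$ is a $\boldsymbol\Theta_n$-contraction if $\|f(S_1,\dots,S_n)\|\le\sup_{\overline{\boldsymbol\Theta}_n}|f|$ for every polynomial $f$. *)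

(* Defs.v *)
From HB Require Import structures.
From mathcomp Require Import all_boot all_order all_algebra.
From mathcomp Require Import fingroup perm complex.
From mathcomp Require Import mpoly.
From mathcomp Require Import classical_sets reals.

Set Implicit Arguments.
Unset Strict Implicit.
Unset Printing Implicit Defensive.

Import Order.TTheory GRing.Theory Num.Theory.
Local Open Scope ring_scope.
Local Open Scope classical_set_scope.

Section Defs.
Variable R : realType.
Local Notation C := R[i].

Definition cabs (z : C) : R := ComplexField.Normc.normc z.

Section Hilbert.
Variable H : lmodType C.
Variable ip : H -> H -> C.

Definition hnorm (x : H) : R := Num.sqrt (complex.Re (ip x x)).

Record hilbert_space : Prop := {
  ip_linear : forall (a : C) (x y z : H), ip (a *: x + y) z = a * ip x z + ip y z;
  ip_conj : forall x y : H, ip y x = conjc (ip x y);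
  ip_pos : forall x : H, 0 <= ip x x;
  ip_def : forall x : H, ip x x = 0 -> x = 0;
  ip_complete : forall u : nat -> H,
    (forall e : R, 0 < e -> exists N, forall k l, (N <= k)%N -> (N <= l)%N ->
        hnorm (u k - u l) < e) ->
    exists x : H, forall e : R, 0 < e -> exists N, forall k, (N <= k)%N ->
        hnorm (u k - x) < e }.

Definition op_norm_le (A : H -> H) (s : R) : Prop :=
  forall x : H, hnorm (A x) <= s * hnorm x.

Definition contraction (A : H -> H) : Prop := op_norm_le A 1.

Definition commuting (n : nat) (T : 'I_n -> H -> H) : Prop :=
  forall i j (x : H), T i (T j x) = T j (T i x).

Definition op_monomial (n : nat) (T : 'I_n -> H -> H) (mu : 'X_{1.. n}) : H -> H :=
  foldr (fun i f => fun x => iter (mu i) (T i) (f x)) id (enum 'I_n).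

Definition op_eval (n : nat) (q : {mpoly C[n]}) (T : 'I_n -> H -> H) : H -> H :=
  fun x => \sum_(mu <- msupp q) q@_mu *: op_monomial T mu x.
End Hilbert.

Definition closed_polydisc (n : nat) : set ('I_n -> C) :=
  [set z | forall i, cabs (z i) <= 1].

(* theta_{i+1} for i : 'I_n (0-based indexing):
   theta_k = s_k(z_1^m, ..., z_n^m) for 1 <= k <= n-1,
   theta_n = (z_1 ... z_n)^(m/p) *)
Definition theta (m p n : nat) (i : 'I_n) : {mpoly C[n]} :=
  if (i.+1 < n)%N then comp_mpoly [tuple ('X_j ^+ m : {mpoly C[n]}) | j < n] (mesym n C i.+1)
  else (\prod_(j < n) 'X_j) ^+ (m %/ p).

Definition theta_map (m p n : nat) (z : 'I_n -> C) : 'I_n -> C :=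
  fun i => (theta m p i).@[z].

(* closure of Theta_n = theta(closed polydisc) *)
Definition closed_Theta (m p n : nat) : set ('I_n -> C) :=
  @theta_map m p n @` @closed_polydisc n.

Definition sup_abs (n : nat) (K : set ('I_n -> C)) (f : {mpoly C[n]}) : R :=
  sup [set cabs f.@[z] | z in K].

Definition Theta_contraction (m p : nat) (H : lmodType C) (ip : H -> H -> C)
    (n : nat) (S : 'I_n -> H -> H) : Prop :=
  commuting S /\
  forall f : {mpoly C[n]}, op_norm_le ip (op_eval f S) (sup_abs (@closed_Theta m p n) f).

Definition in_Gmpn (m p n : nat) (A : 'M[C]_n) : Prop :=
  exists (s : 'S_n) (c : 'I_n -> C),
    [/\ forall i, c i ^+ m = 1,
        (\prod_(i < n) c i) ^+ (m %/ p) = 1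
      & A = \matrix_(i, j) (if j == s i then c i else 0)].

Definition G_act (n : nat) (sigma : 'M[C]_n) (z : 'cV[C]_n) : 'cV[C]_n :=
  invmx sigma *m z.

Definition G_invariant (m p n : nat) (q : {mpoly C[n]}) : Prop :=
  forall sigma : 'M[C]_n, in_Gmpn m p sigma ->
    forall z : 'cV[C]_n,
      q.@[fun i => G_act (invmx sigma) z i 0] = q.@[fun i => z i 0].

Definition vN_ineq (H : lmodType C) (ip : H -> H -> C) (n : nat)
    (T : 'I_n -> H -> H) (q : {mpoly C[n]}) : Prop :=
  op_norm_le ip (op_eval q T) (sup_abs (@closed_polydisc n) q).

End Defs.

(* Main.v *)
Require Import Defs.
From HB Require Import structures.
From mathcomp Require Import all_boot all_order all_algebra.
From mathcomp Require Import fingroup perm complex.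
From mathcomp Require Import mpoly.
From mathcomp Require Import classical_sets reals.
From mathcomp Require Import cyclic separable cyclotomic ssrcomplements boolp.
Import Order.TTheory GRing.Theory Num.Theory.
Local Open Scope ring_scope.

Set Implicit Arguments.
Unset Strict Implicit.
Unset Printing Implicit Defensive.

Section FunCalc.
Variable R : realType.
Local Notation C := R[i].
Variable H : lmodType C.
Variable n : nat.

Definition lin (f : H -> H) := forall (a : C) x y, f (a *: x + y) = a *: f x + f y.

Lemma lin0 f : lin f -> f 0 = 0.
Proof. move=> lf; have := lf 1 0 0; rewrite !scale1r addr0 => /(congr1 (fun z => z - f 0)). by rewrite addrK subrr. Qed.

Lemma linD f : lin f -> forall x y, f (x + y) = f x + f y.
Proof. by move=> lf x y; have := lf 1 x y; rewrite !scale1r. Qed.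

Lemma linZ f : lin f -> forall a x, f (a *: x) = a *: f x.
Proof. by move=> lf a x; rewrite -[a *: x]addr0 lf (lin0 lf) addr0. Qed.

Lemma lin_sum f I (r : seq I) (P : pred I) (F : I -> H) : lin f ->
  f (\sum_(i <- r | P i) F i) = \sum_(i <- r | P i) f (F i).
Proof.
move=> lf; elim/big_rec2: _ => [|i y1 y2 _ <-]; first exact: lin0.
exact: linD.
Qed.

Lemma lin_iter f k : lin f -> lin (iter k f).
Proof. move=> lf; elim: k => [|k IH] a x y //=. by rewrite IH lf. Qed.

Lemma iter_comm (f g : H -> H) k : (forall x, f (g x) = g (f x)) -> forall x, iter k f (g x) = g (iter k f x).
Proof. move=> fg; elim: k => [|k IH] x //=. by rewrite IH fg. Qed.

Variable S : 'I_n -> H -> H.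
Hypothesis linS : forall i, lin (S i).

Definition fmon (l : seq 'I_n) (mu : 'X_{1..n}) : H -> H :=
  foldr (fun i f => fun x => iter (mu i) (S i) (f x)) id l.

Lemma op_monomialE mu : op_monomial S mu = fmon (enum 'I_n) mu.
Proof. by []. Qed.

Lemma lin_fmon l mu : lin (fmon l mu).
Proof.
elim: l => [|i l IH] a x y //=.
by rewrite IH (lin_iter _ (linS i)).
Qed.

Lemma lin_mon mu : lin (op_monomial S mu).
Proof. exact: lin_fmon. Qed.

Lemma fmon0 l x : fmon l 0%MM x = x.
Proof. by elim: l => [|i l IH] //=; rewrite mnm0E /= IH. Qed.

Hypothesis commS : commuting S.

Lemma fmon_comm l mu g : (forall i x, S i (g x) = g (S i x)) ->
  forall x, fmon l mu (g x) = g (fmon l mu x).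
Proof.
move=> hg; elim: l => [|i l IH] x //=.
by rewrite IH iter_comm.
Qed.

Lemma fmonD l mu nu x : fmon l (mu + nu)%MM x = fmon l mu (fmon l nu x).
Proof.
elim: l x => [|i l IH] x //=.
rewrite mnmDE iterD IH.
congr (iter _ _ _).
rewrite (@fmon_comm l mu (iter (nu i) (S i))) //.
move=> j y; rewrite (@iter_comm (S i) (S j)) //.
Qed.

Lemma monD mu nu x : op_monomial S (mu + nu)%MM x = op_monomial S mu (op_monomial S nu x).
Proof. exact: fmonD. Qed.

Lemma mon0 x : op_monomial S 0%MM x = x.
Proof. exact: fmon0. Qed.

Lemma op_evalwE (q : {mpoly C[n]}) k x : (msize q <= k)%N ->
  op_eval q S x = \sum_(mu : 'X_{1..n < k}) q@_mu *: op_monomial S mu x.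
Proof.
move=> lt_pk; pose I : subFinType _ := 'X_{1..n < k}.
rewrite /op_eval (big_mksub I) //=; first last.
  by move=> y /msize_mdeg_lt /leq_trans; apply.
  by rewrite msupp_uniq.
by rewrite big_rmcond //= => i; move/memN_msupp_eq0 ->; rewrite scale0r.
Qed.

Lemma op_evalD (p q : {mpoly C[n]}) x : op_eval (p + q) S x = op_eval p S x + op_eval q S x.
Proof.
pose k := maxn (msize p) (msize q).
have hp : (msize p <= k)%N by rewrite leq_maxl.
have hq : (msize q <= k)%N by rewrite leq_maxr.
have hpq : (msize (p + q) <= k)%N by rewrite (leq_trans (msizeD_le _ _)).
rewrite !(op_evalwE _ hp, op_evalwE _ hq, op_evalwE _ hpq) -big_split /=.
by apply: eq_bigr => mu _; rewrite mcoeffD scalerDl.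
Qed.

Lemma op_evalZ (c : C) (p : {mpoly C[n]}) x : op_eval (c *: p) S x = c *: op_eval p S x.
Proof.
have hp : (msize p <= msize p)%N by [].
have hcp : (msize (c *: p) <= msize p)%N by apply: msizeZ_le.
rewrite (op_evalwE _ hp) (op_evalwE _ hcp) scaler_sumr.
by apply: eq_bigr => mu _; rewrite mcoeffZ scalerA.
Qed.

Lemma op_eval0 x : op_eval 0 S x = 0.
Proof. by rewrite /op_eval msupp0 big_nil. Qed.

Lemma op_eval_sum I (r : seq I) (P : pred I) (F : I -> {mpoly C[n]}) x :
  op_eval (\sum_(i <- r | P i) F i) S x = \sum_(i <- r | P i) op_eval (F i) S x.
Proof.
elim/big_rec2: _ => [|i y1 y2 _ <-]; first exact: op_eval0.
exact: op_evalD.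
Qed.

Lemma op_evalX mu x : op_eval 'X_[mu] S x = op_monomial S mu x.
Proof. by rewrite /op_eval msuppX big_seq1 mcoeffX eqxx scale1r. Qed.

Lemma op_eval1 x : op_eval 1 S x = x.
Proof. by rewrite -mpolyX0 op_evalX mon0. Qed.

Lemma lin_op_eval q : lin (op_eval q S).
Proof.
move=> a x y; rewrite /op_eval scaler_sumr -big_split /=.
apply: eq_bigr => mu _; by rewrite lin_mon scalerDr !scalerA mulrC.
Qed.

Lemma op_evalM (p q : {mpoly C[n]}) x : op_eval (p * q) S x = op_eval p S (op_eval q S x).
Proof.
rewrite mpolyME op_eval_sum big_allpairs /= {2}/op_eval.
apply: eq_bigr => m1 _.
rewrite {2}/op_eval lin_sum; last exact: lin_mon.
rewrite scaler_sumr; apply: eq_bigr => m2 _.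
rewrite op_evalZ op_evalX monD linZ; last exact: lin_mon.
by rewrite scalerA.
Qed.

End FunCalc.

Section Comp.
Variable R : realType.
Local Notation C := R[i].
Variable H : lmodType C.
Variable n : nat.
Variable T : 'I_n -> H -> H.
Hypothesis linT : forall i, lin (T i).
Hypothesis commT : commuting T.
Variable g : 'I_n -> {mpoly C[n]}.
Let S i := op_eval (g i) T.

Lemma linSg i : lin (S i).
Proof. exact: lin_op_eval. Qed.

Lemma commSg : commuting S.
Proof.
move=> i j x; rewrite /S -!op_evalM //.
by rewrite mulrC.
Qed.

Lemma iter_Sg i k P x : iter k (S i) (op_eval P T x) = op_eval (g i ^+ k * P) T x.
Proof.
elim: k => [|k IH] /=; first by rewrite expr0 mul1r.
by rewrite IH /S -op_evalM // exprS mulrA.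
Qed.

Lemma fmon_Sg l mu x : fmon S l mu x = op_eval (\prod_(i <- l) g i ^+ mu i) T x.
Proof.
elim: l => [|i l IH] /=; first by rewrite big_nil op_eval1.
by rewrite IH iter_Sg big_cons.
Qed.

Lemma mon_Sg mu x : op_monomial S mu x = op_eval (\prod_(i < n) g i ^+ mu i) T x.
Proof. by rewrite op_monomialE fmon_Sg enumT. Qed.

Lemma op_eval_comp f x : op_eval f S x = op_eval (f \mPo [tuple g i | i < n]) T x.
Proof.
rewrite comp_mpolyE op_eval_sum {1}/op_eval.
apply: eq_bigr => mu _.
rewrite op_evalZ mon_Sg; congr (_ *: op_eval _ _ _).
by apply: eq_bigr => i _; rewrite tnth_mktuple.
Qed.

End Comp.

Section Agree.
Variable R : realType.
Local Notation C := R[i].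

Lemma mpoly_rmorph_eq k (S : nzRingType) (F G : {rmorphism {mpoly C[k]} -> S}) :
  (forall c, F c%:MP = G c%:MP) -> (forall i, F 'X_i = G 'X_i) -> F =1 G.
Proof.
move=> hC hX p; rewrite (mpolyE p) !rmorph_sum; apply: eq_bigr => m _.
rewrite -mul_mpolyC !rmorphM hC mpolyXE_id !rmorph_prod; congr (_ * _).
by apply: eq_bigr => i _; rewrite !rmorphXn hX.
Qed.

Lemma msymXU n (s : 'S_n) i : msym s ('X_i : {mpoly C[n]}) = 'X_(s i).
Proof. by rewrite /msym mmapX mmap1U. Qed.

Lemma meval_msym n (s : 'S_n) (u : 'I_n -> C) (P : {mpoly C[n]}) :
  (msym s P).@[u] = P.@[fun i => u (s i)].
Proof.
have := @mpoly_rmorph_eq n _ (meval u \o msym s) (meval (fun i => u (s i))).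
apply => [c|i] /=; first by rewrite /msym mmapC !mevalC.
by rewrite msymXU !mevalXU.
Qed.

Lemma meval_perm_sym n (s : 'S_n) (u : 'I_n -> C) (P : {mpoly C[n]}) :
  P \is symmetric -> P.@[fun i => u (s i)] = P.@[u].
Proof. by move/issymP/(_ s) => {2}<-; rewrite meval_msym. Qed.

End Agree.

Section Inv.
Variable R : realType.
Local Notation C := R[i].
Variables m p n : nat.

Lemma Gmat_mul (s : 'S_n) (c : 'I_n -> C) (z : 'cV[C]_n) i :
  ((\matrix_(i, j) (if j == s i then c i else 0)) *m z) i 0 = c i * z (s i) 0.
Proof.
rewrite mxE (bigD1 (s i)) //= mxE eqxx big1 ?addr0 // => j /negbTE hj.
by rewrite mxE hj mul0r.
Qed.

Lemma theta_inv (s : 'S_n) (c : 'I_n -> C) (w : 'I_n -> C) i :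
  (forall k, c k ^+ m = 1) -> (\prod_k c k) ^+ (m %/ p) = 1 ->
  (theta R m p i).@[fun k => c k * w (s k)] = (theta R m p i).@[w].
Proof.
move=> hc hp; rewrite /theta; case: ifP => _.
  rewrite !comp_mpoly_meval.
  rewrite (@meval_eq _ _ _ (fun j => w (s j) ^+ m)); last first.
    by move=> j /=; rewrite tnth_mktuple rmorphXn [X in X ^+ m = _]mevalXU exprMn hc mul1r.
  rewrite [RHS](@meval_eq _ _ _ (fun j => w j ^+ m)); last first.
    by move=> j /=; rewrite tnth_mktuple rmorphXn [X in X ^+ m = _]mevalXU.
  by rewrite (meval_perm_sym s (fun j => w j ^+ m)) // mesym_sym.
rewrite !rmorphXn !rmorph_prod /=.
under eq_bigr do rewrite mevalXU.
under [in RHS]eq_bigr do rewrite mevalXU.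
rewrite big_split /= exprMn hp mul1r.
by rewrite [in RHS](reindex_inj (h := s)) //; exact: perm_inj.
Qed.

Lemma comp_theta_inv (f : {mpoly C[n]}) :
  G_invariant m p (f \mPo [tuple theta R m p i | i < n]).
Proof.
move=> A [s [c [hc hprod ->]]] z.
rewrite /G_act invmxK !comp_mpoly_meval.
apply: meval_eq => i; rewrite !tnth_mktuple.
rewrite (@meval_eq _ _ _ (fun k => c k * z (s k) 0)); last by move=> k; rewrite Gmat_mul.
exact: theta_inv.
Qed.

End Inv.

Lemma sup_comp (R : realType) m p n (f : {mpoly R[i][n]}) :
  sup_abs (@closed_Theta R m p n) f =
  sup_abs (@closed_polydisc R n) (f \mPo [tuple theta R m p i | i < n]).
Proof.
rewrite /sup_abs /closed_Theta image_comp; congr sup; congr image.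
apply: funext => z /=; rewrite comp_mpoly_meval; congr (cabs (meval _ f)).
by apply: funext => i; rewrite tnth_mktuple.
Qed.



Section Ident.
Variable R : realType.
Local Notation C := R[i].

Lemma poly_fun_eq0 (P : {poly C}) : (forall t, P.[t] = 0) -> P = 0.
Proof.
move=> hP; apply/eqP; apply/negPn/negP => nzP.
have := @max_poly_roots _ P [seq (j%:R : C) | j <- iota 0 (size P)] nzP.
rewrite size_map size_iota ltnn=> h; suff : false by [].
apply: h.
  by apply/allP => t _; rewrite /root hP.
rewrite map_inj_uniq ?iota_uniq // => a b /eqP; rewrite eqr_nat => /eqP //.
Qed.

Lemma muni_eval k (P : {mpoly C[k.+1]}) (v : 'I_k.+1 -> C) :
  P.@[v] = (map_poly (meval (fun j => v (widen_ord (leqnSn k) j))) (muni P)).[v ord_max].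
Proof.
rewrite muniE mevalE raddf_sum horner_sum; apply: eq_bigr => mu _.
rewrite /= map_polyZ map_polyXn hornerZ hornerXn.
rewrite -[mpoly_meval__canonical__GRing_RMorphism _ _]/(meval _ _). rewrite mevalZ mevalX -mulrA; congr (_ * _).
rewrite big_ord_recr /=; congr (_ * _); apply: eq_bigr => j _.
by rewrite mnmE.
Qed.

Lemma ord_split k (i : 'I_k.+1) : (exists j : 'I_k, i = widen_ord (leqnSn k) j) \/ i = ord_max.
Proof.
case: (ltnP i k) => h; [left; exists (Ordinal h); exact: val_inj|right; apply: val_inj => /=].
by apply/eqP; rewrite eqn_leq h -ltnS ltn_ord.
Qed.

Lemma muni_coef k (P : {mpoly C[k.+1]}) (mu : 'X_{1..k.+1}) :
  P@_mu = ((muni P)`_(mu ord_max))@_[multinom mu (widen_ord (leqnSn k) i) | i < k].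
Proof.
rewrite muniE coef_sum raddf_sum {1}(mpolyE P) raddf_sum /=.
apply: eq_bigr => nu _.
rewrite coefZ coefXn mulr_natr mcoeffMn !mcoeffZ !mcoeffX.
case: (eqVneq nu mu) => [->|ne]; first by rewrite !eqxx.
rewrite mulr0; case: eqP => [e|_]; last by rewrite mulr0 mul0rn.
case: eqP => [e'|_]; last by rewrite mulr0n.
case/eqP: ne; apply/mnmP => i; case: (ord_split i) => [[j ->]|->] //.
by move/mnmP: e => /(_ j); rewrite !mnmE.
Qed.

Lemma mpoly_fun_eq0 k (P : {mpoly C[k]}) : (forall v, P.@[v] = 0) -> P = 0.
Proof.
elim: k P => [|k IH] P hP.
  by rewrite (nvar0_mpolyC P); have := hP (fun _ => 0); rewrite {1}(nvar0_mpolyC P) mevalC => ->.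
have hm : muni P = 0.
  apply/polyP => e; rewrite coef0; apply: IH => v'.
  pose Q := map_poly (meval v') (muni P).
  have hQ : Q = 0.
    apply: poly_fun_eq0 => t; rewrite /Q.
    pose v (i : 'I_k.+1) := if (i < k)%N =P true is ReflectT h then v' (Ordinal h) else t.
    have -> : v' = (fun j => v (widen_ord (leqnSn k) j)).
      apply: funext => j; rewrite /v; case: eqP => h /=; last by case: h; rewrite /= ltn_ord.
      by congr v'; apply: val_inj.
    have -> : t = v ord_max by rewrite /v; case: eqP => //= h; exfalso; move: h; rewrite /= ltnn.
    by rewrite -muni_eval hP.
  by move: (congr1 (fun Q0 : {poly C} => Q0`_e) hQ); rewrite /Q coef_map coef0.
apply/mpolyP => mu; by rewrite mcoeff0 muni_coef hm coef0 mcoeff0.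
Qed.


Lemma prim_root_ex (k : nat) : (0 < k)%N -> {z : C | k.-primitive_root z}.
Proof.
pose P : {poly C} := 'X^k - 1; have [r Dp] := closed_field_poly_normal P.
move=> k_gt0; apply/sigW; rewrite (monicP _) ?monicXnsubC // scale1r in Dp.
have rn1: all k.-unity_root r by apply/allP=> z; rewrite -root_prod_XsubC -Dp.
have sz_r: (k < (size r).+1)%N.
  by rewrite -(size_prod_XsubC r id) -Dp size_XnsubC.
have [|z] := hasP (has_prim_root k_gt0 rn1 _ sz_r); last by exists z.
by rewrite -separable_prod_XsubC -Dp separable_Xn_sub_1 // pnatr_eq0 -lt0n.
Qed.

Lemma mcoeff_supp_sum n (P : {mpoly C[n]}) (G : 'X_{1..n} -> C) al :
  (\sum_(b <- msupp P) (P@_b * G b) *: 'X_[b])@_al = P@_al * G al.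
Proof.
rewrite raddf_sum /=; case: (boolP (al \in msupp P)) => h.
  rewrite (bigD1_seq al) ?msupp_uniq //= mcoeffZ mcoeffX eqxx mulr1 big1 ?addr0 //.
  by move=> b /negbTE nb; rewrite mcoeffZ mcoeffX nb mulr0.
rewrite big_seq big1; first by rewrite (memN_msupp_eq0 h) mul0r.
move=> b hb; rewrite mcoeffZ mcoeffX; case: eqP => [e|_]; last by rewrite mulr0.
by move: h; rewrite -e hb.
Qed.

End Ident.

Section Extract.
Variable R : realType.
Local Notation C := R[i].
Variables m p n : nat.
Hypotheses (m0 : (0 < m)%N) (p0 : (0 < p)%N) (pm : (p %| m)%N) (n1 : (1 < n)%N).
Variable q : {mpoly C[n]}.
Hypothesis hq : G_invariant m p q.

Lemma inv_eval (s : 'S_n) (c : 'I_n -> C) :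
  (forall k, c k ^+ m = 1) -> (\prod_k c k) ^+ (m %/ p) = 1 ->
  forall v, q.@[fun k => c k * v (s k)] = q.@[v].
Proof.
move=> hc hp v.
have := hq (sigma := \matrix_(i, j) (if j == s i then c i else 0)) _ (\col_k v k).
rewrite /G_act invmxK => h.
have {}h := h (ex_intro _ s (ex_intro _ c (And3 hc hp erefl))).
transitivity (q.@[fun i => ((\matrix_(i, j) (if j == s i then c i else 0)) *m \col_k v k) i 0]).
  by apply: meval_eq => i; rewrite Gmat_mul mxE.
by rewrite h; apply: meval_eq => i; rewrite mxE.
Qed.

Lemma q_sym : q \is symmetric.
Proof.
apply/issymP => s; apply/eqP; rewrite -subr_eq0; apply/eqP.
apply: mpoly_fun_eq0 => v; rewrite mevalB meval_msym.
have := @inv_eval s (fun _ => 1) (fun _ => expr1n _ _) _ v.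
rewrite big1_eq expr1n => /(_ erefl).
under [X in X = _ -> _]meval_eq do rewrite mul1r.
by move=> ->; rewrite subrr.
Qed.

Lemma q_diag (c : 'I_n -> C) :
  (forall k, c k ^+ m = 1) -> (\prod_k c k) ^+ (m %/ p) = 1 ->
  forall al, al \in msupp q -> \prod_i c i ^+ al i = 1.
Proof.
move=> hc hp al hal.
pose Qc := q \mPo [tuple c i *: 'X_i | i < n].
have e1 : Qc = q.
  apply/eqP; rewrite -subr_eq0; apply/eqP; apply: mpoly_fun_eq0 => v.
  rewrite mevalB comp_mpoly_meval.
  rewrite (@meval_eq _ _ _ (fun k => c k * v ((1%g : 'S_n) k))); last first.
    by move=> k /=; rewrite tnth_mktuple mevalZ mevalXU perm1.
  by rewrite inv_eval // subrr.
have e2 : Qc = \sum_(b <- msupp q) (q@_b * \prod_i c i ^+ b i) *: 'X_[b].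
  rewrite /Qc comp_mpolyE; apply: eq_bigr => b _; rewrite -scalerA; congr (_ *: _).
  rewrite (eq_bigr (fun i => c i ^+ b i *: 'X_i ^+ b i)); last first.
    by move=> i _; rewrite tnth_mktuple exprZn.
  by rewrite scaler_prod -mpolyXE_id.
have := congr1 (fun P => P@_al) e2; rewrite e1 mcoeff_supp_sum /=.
have nz : q@_al != 0 by rewrite -mcoeff_msupp.
by move/(congr1 (fun x => x / q@_al)); rewrite mulrAC divff // mul1r.
Qed.

Definition i0 : 'I_n := Ordinal (ltnW n1).

Lemma prod2 (i j : 'I_n) (F : 'I_n -> C) : i != j ->
  (forall k, k != i -> k != j -> F k = 1) -> \prod_k F k = F i * F j.
Proof.
move=> ij hF; rewrite (bigD1 i) //= (bigD1 j) /=; last by rewrite eq_sym.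
by rewrite big1 ?mulr1 // => k /andP[ki kj]; apply: hF.
Qed.

Lemma prod1 (i : 'I_n) (F : 'I_n -> C) :
  (forall k, k != i -> F k = 1) -> \prod_k F k = F i.
Proof.
move=> hF; rewrite (bigD1 i) //= big1 ?mulr1 // => k ki; exact: hF.
Qed.

Variable z : C.
Hypothesis hz : m.-primitive_root z.

Lemma zm : z ^+ m = 1.
Proof. exact: prim_expr_order. Qed.

Lemma cong_i (i : 'I_n) al : al \in msupp q -> al i = al i0 %[mod m].
Proof.
move=> hal; case: (eqVneq i i0) => [->//|ne].
pose c k := if k == i then z else if k == i0 then z ^+ m.-1 else 1.
have hc k : c k ^+ m = 1.
  rewrite /c; case: eqP => _; first exact: zm.
  case: eqP => _; last exact: expr1n.
  by rewrite exprAC zm expr1n.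
have hF k : k != i -> k != i0 -> c k = 1 by rewrite /c => /negbTE -> /negbTE ->.
have hp : (\prod_k c k) ^+ (m %/ p) = 1.
  rewrite (prod2 ne hF) /c eqxx eq_sym (negbTE ne) eqxx.
  by rewrite -exprS prednK // zm expr1n.
have := q_diag hc hp hal.
rewrite (@prod2 i i0 (fun k => c k ^+ al k) ne); last first.
  by move=> k ki ki0; rewrite hF // expr1n.
rewrite /c eqxx eq_sym (negbTE ne) eqxx -exprM -exprD => /eqP.
rewrite -(prim_order_dvd hz) => /dvdnP [k hk].
apply/eqP; rewrite -(modnMDl (al i0)) -(modnMDl k (al i0)).
suff -> : (al i0 * m + al i = k * m + al i0)%N by [].
by rewrite -hk -addnA -mulSnr prednK // [(_ * m)%N]mulnC addnC.
Qed.

Lemma q0_dvd al : al \in msupp q -> (m %/ p %| al i0)%N.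
Proof.
move=> hal.
pose c k := if k == i0 then z ^+ p else 1.
have hc k : c k ^+ m = 1.
  rewrite /c; case: eqP => _; last exact: expr1n.
  by rewrite exprAC zm expr1n.
have hF k : k != i0 -> c k = 1 by rewrite /c => /negbTE ->.
have hp : (\prod_k c k) ^+ (m %/ p) = 1.
  by rewrite (prod1 hF) /c eqxx -exprM mulnC divnK // zm.
have := q_diag hc hp hal.
rewrite (@prod1 i0 (fun k => c k ^+ al k)); last by move=> k ki; rewrite hF // expr1n.
rewrite /c eqxx -exprM => /eqP; rewrite -(prim_order_dvd hz).
by rewrite -{1}(divnK pm) [(p * _)%N]mulnC dvdn_pmul2r.
Qed.

End Extract.


Lemma comp_mpolyA (R : realType) k l n' (t : {mpoly R[i][k]}) (L : k.-tuple {mpoly R[i][l]})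
   (M : l.-tuple {mpoly R[i][n']}) :
  (t \mPo L) \mPo M = t \mPo [tuple (tnth L i \mPo M) | i < k].
Proof.
have := @mpoly_rmorph_eq R k _ (comp_mpoly M \o comp_mpoly L) (comp_mpoly [tuple (tnth L i \mPo M) | i < k]).
apply => [c|i] /=; first by rewrite !comp_mpolyC.
by rewrite !comp_mpolyXU -!tnth_nth tnth_mktuple.
Qed.

Lemma comp_mpolyXUn (R : comNzRingType) n k (lq : n.-tuple {mpoly R[k]}) (i : 'I_n) e :
  ('X_i ^+ e) \mPo lq = (tnth lq i) ^+ e.
Proof. have h : comp_mpoly lq 'X_i = tnth lq i by rewrite comp_mpolyXU -tnth_nth. rewrite -h; exact: rmorphXn. Qed.

Section Construct.
Variable R : realType.
Local Notation C := R[i].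
Variables m p n : nat.
Hypotheses (m0 : (0 < m)%N) (p0 : (0 < p)%N) (pm : (p %| m)%N) (n1 : (1 < n)%N).
Variable q : {mpoly C[n]}.
Let i0 : 'I_n := Ordinal (ltnW n1).
Hypothesis hsym : q \is symmetric.
Hypothesis hcong : forall al, al \in msupp q -> forall i, al i = al i0 %[mod m].
Hypothesis hdvd : forall al, al \in msupp q -> (m %/ p %| al i0)%N.

Let q0 := (m %/ p)%N.
Let K := msize q.
Definition gam (j : nat) (b : 'X_{1..n}) : 'X_{1..n} := [multinom (q0 * j + b i * m)%N | i < n].
Definition gpol (j : nat) : {mpoly C[n]} := \sum_(b : 'X_{1..n < K}) q@_(gam j b) *: 'X_[b].

Lemma gpol_coef j b : (gpol j)@_b = q@_(gam j b).
Proof.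
rewrite /gpol; case: (ltnP (mdeg b) K) => h; first by rewrite (mcoeff_mpoly (fun x => q@_(gam j x))).
rewrite raddf_sum big1 /=; last first.
  move=> b' _; rewrite mcoeffZ mcoeffX; case: eqP => [e|_]; last by rewrite mulr0.
  by have := bmdeg b'; rewrite e ltnNge h.
apply/esym/memN_msupp_eq0/msize_mdeg_ge; apply: (leq_trans h).
rewrite !mdegE; apply: leq_sum => i _; rewrite mnmE.
by rewrite (leq_trans (leq_pmulr _ m0)) // leq_addl.
Qed.

Lemma gpol_sym j : gpol j \is symmetric.
Proof.
apply/issymP => s; apply/mpolyP => b; rewrite mcoeff_sym !gpol_coef.
have -> : gam j [multinom b (s i) | i < n] = [multinom (gam j b) (s i) | i < n].
  by apply/mnmP => i; rewrite !mnmE.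
by rewrite -mcoeff_sym (issymP _ hsym).
Qed.

Local Notation Sm := [tuple mesym n C i.+1 | i < n].
Local Notation XM := [tuple ('X_j ^+ m : {mpoly C[n]}) | j < n].
Local Notation Th := [tuple theta R m p i | i < n].

Definition tpol (j : nat) : {mpoly C[n]} := sval (sym_fundamental (gpol_sym j)).
Lemma tpolE j : tpol j \mPo Sm = gpol j.
Proof. by rewrite /tpol; case: (sym_fundamental _) => t [] /=. Qed.

Lemma ilastP : (n.-1 < n)%N.
Proof. by rewrite ltn_predL ltnW. Qed.
Let ilast : 'I_n := Ordinal ilastP.

Local Notation Lt := [tuple (if (i.+1 < n)%N then 'X_i else 'X_i ^+ p : {mpoly C[n]}) | i < n].

Definition fpol : {mpoly C[n]} := \sum_(j < p) 'X_ilast ^+ j * (tpol j \mPo Lt).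

Lemma q0p : (q0 * p)%N = m.
Proof. by rewrite /q0 divnK. Qed.

Lemma prodX_comp : (\prod_(i < n) 'X_i : {mpoly C[n]}) \mPo XM = (\prod_(i < n) 'X_i) ^+ m.
Proof.
rewrite rmorph_prod -prodrXl; apply: eq_bigr => i _.
by rewrite -[mpoly_comp_mpoly__canonical__GRing_RMorphism _ _]/(comp_mpoly _ _) comp_mpolyXU -tnth_nth tnth_mktuple.
Qed.

Lemma Lt_comp (i : 'I_n) : tnth Lt i \mPo Th = mesym n C i.+1 \mPo XM.
Proof.
rewrite tnth_mktuple; case: ifP => h.
  by rewrite comp_mpolyXU -tnth_nth tnth_mktuple /theta h.
rewrite comp_mpolyXUn tnth_mktuple /theta h.
have e : i.+1 = n by apply/eqP; rewrite eqn_leq ltn_ord leqNgt h.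
by rewrite e mesymnnE prodX_comp -exprM q0p.
Qed.

Lemma ilast_comp : tnth Th ilast = (\prod_(i < n) 'X_i) ^+ q0.
Proof.
rewrite tnth_mktuple /theta /=.
by rewrite prednK ?ltnn // ltnW.
Qed.

Lemma tpol_comp j : (tpol j \mPo Lt) \mPo Th = gpol j \mPo XM.
Proof.
rewrite (comp_mpolyA (tpol j) Lt Th) -(tpolE j) (comp_mpolyA (tpol j) Sm XM).
apply: (congr1 (fun L => tpol j \mPo L)).
apply: eq_mktuple => i.
by rewrite Lt_comp tnth_mktuple.
Qed.

Lemma Xb_comp (b : 'X_{1..n}) : 'X_[b] \mPo XM = 'X_[[multinom (b i * m)%N | i < n]].
Proof.
rewrite comp_mpolyX mpolyXE_id; apply: eq_bigr => i _.
by rewrite tnth_mktuple mnmE -exprM mulnC.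
Qed.

Lemma prodX_gam j (b : 'X_{1..n}) :
  (\prod_(i < n) 'X_i) ^+ (q0 * j) * 'X_[[multinom (b i * m)%N | i < n]] = 'X_[gam j b] :> {mpoly C[n]}.
Proof.
rewrite !mpolyXE_id -prodrXl -big_split; apply: eq_bigr => i _.
by rewrite !mnmE exprD.
Qed.

Lemma fpol_comp : fpol \mPo Th =
  \sum_(j < p) \sum_(b : 'X_{1..n < K}) q@_(gam j b) *: 'X_[gam j b].
Proof.
have hS : forall (I : Type) (r : seq I) (P : pred I) (F : I -> {mpoly C[n]}),
    (\sum_(j <- r | P j) F j) \mPo Th = \sum_(j <- r | P j) (F j \mPo Th).
  by move=> I r P F; exact: rmorph_sum.
have hS' : forall (I : Type) (r : seq I) (P : pred I) (F : I -> {mpoly C[n]}),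
    (\sum_(j <- r | P j) F j) \mPo XM = \sum_(j <- r | P j) (F j \mPo XM).
  by move=> I r P F; exact: rmorph_sum.
have hM : forall a b : {mpoly C[n]}, (a * b) \mPo Th = (a \mPo Th) * (b \mPo Th).
  by move=> a b; exact: rmorphM.
rewrite /fpol hS; apply: eq_bigr => j _.
rewrite hM comp_mpolyXUn ilast_comp tpol_comp -exprM /gpol hS' mulr_sumr.
apply: eq_bigr => b _.
by rewrite comp_mpolyZ Xb_comp -scalerAr prodX_gam.
Qed.

Lemma q0_gt0 : (0 < q0)%N.
Proof. by rewrite /q0 divn_gt0 // dvdn_leq. Qed.

Lemma fpol_eq : q = fpol \mPo Th.
Proof.
rewrite fpol_comp; apply/mpolyP => al.
rewrite raddf_sum /=.
have hterm : forall (j : nat) (b : 'X_{1..n}),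
    (q@_(gam j b) *: 'X_[gam j b])@_al = q@_al * (gam j b == al)%:R.
  by move=> j b; rewrite mcoeffZ mcoeffX; case: eqP => [->|_]; rewrite ?mulr0.
under eq_bigr do rewrite raddf_sum /=.
under eq_bigr do under eq_bigr do rewrite hterm.
case: (boolP (al \in msupp q)) => hal; last first.
  rewrite (memN_msupp_eq0 hal) big1 // => j _; rewrite big1 // => b _; by rewrite mul0r.
have q0m : (q0 %| m)%N by rewrite -q0p dvdn_mulr.
have hx : (q0 %| al i0 %% m)%N by rewrite /dvdn modn_dvdm // -/(dvdn _ _) hdvd.
pose j0 := ((al i0 %% m) %/ q0)%N.
have hj0 : (j0 < p)%N by rewrite /j0 ltn_divLR ?q0_gt0 // mulnC q0p ltn_pmod.
pose b0 : 'X_{1..n} := [multinom (al i %/ m)%N | i < n].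
have hb0 : (mdeg b0 < K)%N.
  apply: leq_ltn_trans (msize_mdeg_lt hal); rewrite !mdegE; apply: leq_sum => i _.
  by rewrite mnmE leq_div.
have hg : gam j0 b0 = al.
  apply/mnmP => i; rewrite !mnmE /j0 mulnC divnK // -(hcong hal i) addnC.
  by rewrite -divn_eq.
have huniq : forall (j : nat) b, (j < p)%N -> gam j b = al -> j = j0 /\ b = b0.
  move=> j b jp e.
  have ej : (q0 * j + b i0 * m)%N = al i0 by rewrite -e mnmE.
  have lt : (q0 * j < m)%N by rewrite -q0p ltn_pmul2l // q0_gt0.
  have hm : (al i0 %% m = q0 * j)%N by rewrite -ej addnC modnMDl modn_small.
  split; first by rewrite /j0 hm mulKn // q0_gt0.
  by apply/mnmP => i; rewrite /b0 mnmE -e mnmE addnC divnMDl // divn_small // addn0.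
rewrite (bigD1 (Ordinal hj0)) //= [X in _ = _ + X]big1 ?addr0; last first.
  move=> j hj; rewrite big1 // => b _; case: eqP => [e|_]; last by rewrite mulr0.
  have [ej _] := huniq _ _ (ltn_ord j) e.
  by move: hj; rewrite -(inj_eq val_inj) /= ej eqxx.
rewrite (bigD1 (Sub b0 hb0 : 'X_{1..n < K})) //= [X in _ = _ + X]big1 ?addr0; last first.
  move=> b hb; case: eqP => [e|_]; last by rewrite mulr0.
  have [_ eb] := huniq _ _ hj0 e.
  by move: hb; rewrite -(inj_eq val_inj) /= eb eqxx.
by rewrite hg eqxx mulr1.
Qed.

End Construct.

Lemma inv_comp (R : realType) m p n : (0 < m)%N -> (0 < p)%N -> (p %| m)%N -> (1 < n)%N ->
  forall q : {mpoly R[i][n]}, G_invariant m p q ->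
  exists f, q = f \mPo [tuple theta R m p i | i < n].
Proof.
move=> m0 p0 pm n1 q hq.
have [z hz] := prim_root_ex R m0.
exists (fpol p m0 n1 (q_sym hq)).
apply: (fpol_eq m0 p0 pm).
- by move=> al hal i; exact: (cong_i m0 n1 hq hz i hal).
- by move=> al hal; exact: (q0_dvd p0 pm n1 hq hz hal).
Qed.

Theorem proposition2p8 (R : realType) (m p n : nat)
  (H : lmodType R[i]) (ip : H -> H -> R[i]) (T : 'I_n -> {linear H -> H}) :
  (0 < m)%N -> (0 < p)%N -> (p %| m)%N -> (1 < n)%N ->
  hilbert_space ip ->
  commuting (fun i => (T i : H -> H)) ->
  (forall i, contraction ip (T i)) ->
  (Theta_contraction m p ip (fun i => op_eval (@theta R m p n i) (fun j => (T j : H -> H)))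
   <-> forall q : {mpoly R[i][n]}, G_invariant m p q -> vN_ineq ip (fun j => (T j : H -> H)) q).
Proof.
move=> m0 p0 pm n1 _ commT _.
have linT : forall i, lin (T i : H -> H) by move=> i a x y; rewrite linearP.
split.
  move=> [_ hS] q hq; have [f ->] := inv_comp m0 p0 pm n1 hq.
  move=> x; rewrite -op_eval_comp // -sup_comp; exact: hS.
move=> hvn; split; first exact: commSg.
move=> f x; rewrite op_eval_comp // sup_comp.
exact: (hvn _ (@comp_theta_inv R m p n f)).
Qed.
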